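(* The set of parallelogram polyominoes equals $Av_{\mathfrak{P}}\left(\begin{bmatrix}1&0\\1&1\end{bmatrix},\begin{bmatrix}1&1\\0&1\end{bmatrix}\right)$.
   Context: A polyomino is a finite union of unit cells of $\mathbb{Z}\times\mathbb{Z}$ that is connected via edge adjacency, up to translation, identified with the binary matrix of its minimal bounding rectangle (entry $1$ iff the corresponding unit square is a cell; rows numbered bottom to top, and in displayed matrices the first written row is the top row). A matrix is a submatrix of another if obtained by deleting rows and/or columns; $Av_{\mathfrak{P}}(\mathcal{M})$ is the set of polyominoes with no submatrix in $\mathcal{M}$. A parallelogram polyomino is a polyomino whose boundary can be decomposed into two lattice paths (upper and lower) made of north and east unit steps which meet only at their common starting and ending points. *)

(* Defs.v *)
From mathcomp Require Import all_boot all_order all_algebra.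
Set Implicit Arguments. Unset Strict Implicit. Unset Printing Implicit Defensive.
Import Order.TTheory GRing.Theory Num.Theory.
Local Open Scope ring_scope.

(* A cell (x, y) of Z x Z is the unit square [x, x+1] x [y, y+1].
   A finite set of cells is represented by a sequence (membership only matters). *)
Definition cell := (int * int)%type.

Definition adjacent (c d : cell) : bool :=
  (`|c.1 - d.1| + `|c.2 - d.2| == 1)%N.

Definition is_polyomino (s : seq cell) : Prop :=
  s != [::] /\
  forall c d, c \in s -> d \in s ->
    exists p : seq cell, all (fun e => e \in s) p /\ path adjacent c p /\ last c p = d.

Definition xmin (s : seq cell) : int :=
  \big[Num.min/(head (0,0) s).1]_(c <- s) c.1.
Definition ymax (s : seq cell) : int :=
  \big[Num.max/(head (0,0) s).2]_(c <- s) c.2.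
Definition xmax (s : seq cell) : int :=
  \big[Num.max/(head (0,0) s).1]_(c <- s) c.1.
Definition ymin (s : seq cell) : int :=
  \big[Num.min/(head (0,0) s).2]_(c <- s) c.2.
Definition pwidth (s : seq cell) : nat := (`|xmax s - xmin s|).+1.
Definition pheight (s : seq cell) : nat := (`|ymax s - ymin s|).+1.

(* binary matrix of the minimal bounding rectangle, in display order:
   matrix row 0 is the TOP row (y = ymax), column 0 is the leftmost (x = xmin) *)
Definition poly_matrix (s : seq cell) : 'M[bool]_(pheight s, pwidth s) :=
  \matrix_(i < pheight s, j < pwidth s) ((xmin s + (j : nat)%:Z, ymax s - (i : nat)%:Z) \in s).

Definition submatrix_of (k l m n : nat) (A : 'M[bool]_(k, l)) (M : 'M[bool]_(m, n)) : Prop :=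
  exists (f : 'I_k -> 'I_m) (g : 'I_l -> 'I_n),
    (forall i i' : 'I_k, (i < i')%N -> (f i < f i')%N) /\
    (forall j j' : 'I_l, (j < j')%N -> (g j < g j')%N) /\
    (forall i j, M (f i) (g j) = A i j).

(* the two 2x2 patterns, written in display order (first row = top row) *)
(* [1 0; 1 1] *)
Definition pat1 : 'M[bool]_(2, 2) :=
  \matrix_(i < 2, j < 2) ~~ (((i : nat) == 0%N) && ((j : nat) == 1%N)).
(* [1 1; 0 1] *)
Definition pat2 : 'M[bool]_(2, 2) :=
  \matrix_(i < 2, j < 2) ~~ (((i : nat) == 1%N) && ((j : nat) == 0%N)).

Definition avoids_pats (s : seq cell) : Prop :=
  ~ submatrix_of pat1 (poly_matrix s) /\ ~ submatrix_of pat2 (poly_matrix s).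

(* Lattice paths made of north (true) and east (false) unit steps, from (0,0). *)
Definition lpt (u : seq bool) (k : nat) : nat * nat :=
  (count negb (take k u), count id (take k u)).

Definition east_step (u : seq bool) (x y : nat) : Prop :=
  exists2 k, (k < size u)%N & nth true u k = false /\ lpt u k = (x, y).

Definition between (u l : seq bool) (x y : int) : Prop :=
  exists (n : nat) (yu yl : nat), x = n%:Z /\ east_step u n yu /\ east_step l n yl /\
     yl%:Z <= y /\ y < yu%:Z.

(* parallelogram polyomino: its boundary decomposes into two N/E lattice paths
   (upper u, lower l) with common start and end point which meet only there;
   the polyomino is the region enclosed by them (up to translation). *)
Definition is_parallelogram (s : seq cell) : Prop :=
  exists (u l : seq bool) (dx dy : int),
    size u = size l /\ lpt u (size u) = lpt l (size l) /\
    (forall i j, (i <= size u)%N -> (j <= size l)%N -> lpt u i = lpt l j ->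
        (i = 0%N /\ j = 0%N) \/ (i = size u /\ j = size l)) /\
    (forall c : cell, c \in s <-> between u l (c.1 - dx) (c.2 - dy)).

(* Main.v *)
Require Import Defs.
From mathcomp Require Import all_boot all_order all_algebra zify.
Import Order.TTheory GRing.Theory Num.Theory.

Lemma lpt0 u : lpt u 0 = (0, 0)%N.
Proof. by rewrite /lpt take0. Qed.

Lemma lpt_size u : lpt u (size u) = (count negb u, count id u).
Proof. by rewrite /lpt take_size. Qed.

Lemma lpt_S u i : (i < size u)%N ->
  lpt u i.+1 = if nth true u i then ((lpt u i).1, (lpt u i).2.+1)
               else ((lpt u i).1.+1, (lpt u i).2).
Proof.
move=> Hi; rewrite /lpt (take_nth true Hi) -!cats1 !count_cat /=.
by case: (nth true u i) => /=; rewrite !addn0 ?addn1.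
Qed.

Lemma lpt_sum u i : ((lpt u i).1 + (lpt u i).2 = minn i (size u))%N.
Proof.
rewrite /lpt /= addnC -size_take_min -(count_predC id (take i u)).
by congr (_ + _); apply: eq_count => b.
Qed.

Lemma lpt_cnt u i : ((lpt u i).1 <= count negb u /\ (lpt u i).2 <= count id u)%N.
Proof.
have E : u = take i u ++ drop i u by rewrite cat_take_drop.
rewrite /lpt /=; split; rewrite [in X in (_ <= X)%N]E count_cat; apply: leq_addr.
Qed.

Lemma east_mono u n1 y1 n2 y2 : east_step u n1 y1 -> east_step u n2 y2 ->
  (n1 <= n2)%N -> (y1 <= y2)%N.
Proof.
move=> [k1 Hk1 [Hn1 Hl1]] [k2 Hk2 [Hn2 Hl2]] Hn.
case: (leqP k1 k2) => Hk.
- move: Hl1 Hl2; rewrite /lpt => -[_ <-] [_ <-].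
  rewrite -(subnKC Hk) takeD count_cat; apply: leq_addr.
- have H := @lpt_S u k2 Hk2; rewrite Hn2 Hl2 /= in H.
  move: Hl1; rewrite /lpt => -[Hx _].
  have : (count negb (take k2.+1 u) <= count negb (take k1 u))%N.
    rewrite -(subnKC Hk) takeD count_cat; apply: leq_addr.
  move: H; rewrite /lpt => -[-> _]. lia.
Qed.

Lemma east_G1 u : forall d i x y, (size u - i <= d)%N -> (i <= size u)%N ->
  lpt u i = (x, y) -> (x < count negb u)%N ->
  exists y', (y <= y')%N /\ east_step u x y'.
Proof.
elim=> [|d IH] i x y Hd Hi Hl Hx.
- have Hi' : i = size u by lia.
  by move: Hl; rewrite Hi' lpt_size => -[Hx' _]; lia.
- case: (ltnP i (size u)) => Hi2; last first.
    have Hi' : i = size u by lia.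
    by move: Hl; rewrite Hi' lpt_size => -[Hx' _]; lia.
  have HS := @lpt_S u i Hi2. rewrite Hl /= in HS.
  case Hb: (nth true u i) HS => HS.
  + have [y' [Hy' He]] := IH i.+1 x y.+1 ltac:(lia) Hi2 HS Hx.
    exists y'; split => //; lia.
  + by exists y; split => //; exists i.
Qed.

Lemma east_G2 u : forall i x y, (i <= size u)%N -> lpt u i = (x, y) -> (0 < x)%N ->
  exists y', (y' <= y)%N /\ east_step u x.-1 y'.
Proof.
elim=> [|i IH] x y Hi Hl Hx.
- by move: Hl; rewrite lpt0 => -[Hx' _]; lia.
- have HS := @lpt_S u i Hi. rewrite Hl in HS.
  case Hb: (nth true u i) HS => HS.
  + case: HS => Hx1 Hy1.
    have [y' [Hy' He]] := IH (count negb (take i u)) (count id (take i u)) (ltnW Hi) erefl ltac:(lia).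
    exists y'; split; first lia. by rewrite Hx1.
  + case: HS => Hx1 Hy1.
    exists y; split => //. exists i => //; split => //.
    rewrite /lpt; congr (_, _); lia.
Qed.

Lemma lpt_cons b r k : lpt (b :: r) k.+1 =
  if b then ((lpt r k).1, (lpt r k).2.+1) else ((lpt r k).1.+1, (lpt r k).2).
Proof. by rewrite /lpt /=; case: b. Qed.

Lemma east_true r n y : east_step (true :: r) n y <-> exists y', y = y'.+1 /\ east_step r n y'.
Proof.
split.
- move=> [[|k] Hk [Hn Hl]] //=.
  move: Hl; rewrite lpt_cons => -[Hx Hy].
  exists (lpt r k).2; split => //. exists k => //; split => //.
  rewrite /lpt; congr (_,_); lia.
- move=> [y' [-> [k Hk [Hn Hl]]]]. exists k.+1 => //; split => //.
  by rewrite lpt_cons Hl.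
Qed.

Lemma east_false r n y : east_step (false :: r) n y <->
  (n = 0 /\ y = 0) \/ exists n', n = n'.+1 /\ east_step r n' y.
Proof.
split.
- move=> [[|k] Hk [Hn Hl]].
  + by left; move: Hl; rewrite lpt0 => -[<- <-].
  + right; move: Hl; rewrite lpt_cons => -[Hx Hy].
    exists (lpt r k).1; split => //. exists k => //; split => //.
    rewrite /lpt; congr (_,_); lia.
- case=> [[-> ->]|[n' [-> [k Hk [Hn Hl]]]]].
  + by exists 0.
  + exists k.+1 => //; split => //. by rewrite lpt_cons Hl.
Qed.

Lemma east_nseq k r n y : east_step (nseq k true ++ r) n y <->
  exists y', y = y' + k /\ east_step r n y'.
Proof.
elim: k n y => [|k IH] n y /=.
- split; [move=> H; exists y; split => //; lia | by move=> [y' [-> H]]; rewrite addn0].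
- rewrite east_true; split.
  + move=> [y' [-> /IH [y'' [-> H]]]]. exists y''; split => //; lia.
  + move=> [y' [-> H]]. exists (y' + k); split; first lia. by apply/IH; exists y'.
Qed.

Lemma east_nseq0 k n y : ~ east_step (nseq k true) n y.
Proof. by move=> [i Hi [Hn _]]; move: Hn; rewrite nth_nseq; case: ifP. Qed.

Fixpoint mk (prev : nat) (hs : seq nat) (H : nat) : seq bool :=
  match hs with
  | [::] => nseq (H - prev) true
  | h :: hs' => nseq (h - prev) true ++ false :: mk h hs' H
  end.

Lemma mk_east hs : forall prev H, path leq prev hs ->
  forall n y, east_step (mk prev hs H) n y <-> (n < size hs /\ y + prev = nth 0 hs n).
Proof.
elim: hs => [|h hs IH] prev H /=.
- move=> _ n y; split; [by move/east_nseq0 | by case].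
- move=> /andP [Hph Hp] n y. rewrite east_nseq. split.
  + move=> [y' [-> /east_false [[-> ->]|[n' [-> /(IH _ _ Hp) [Hn Hy]]]]]].
    * split => //=. lia.
    * split => //=. lia.
  + case: n => [|n] /= [Hn Hy].
    * exists 0; split; first lia. by apply/east_false; left.
    * have Hh : h <= nth 0 hs n.
        move: Hp; rewrite (path_sortedE leq_trans) => /andP [/allP Ha _].
        by apply: Ha; apply: mem_nth.
      exists (y + prev - h); split; first lia.
      apply/east_false; right; exists n; split => //.
      apply/(IH _ _ Hp); split => //. lia.
Qed.

Lemma mk_cnegb hs : forall prev H, count negb (mk prev hs H) = size hs.
Proof.
elim: hs => [|h hs IH] prev H /=.
- by rewrite count_nseq /= mul0n.
- by rewrite count_cat count_nseq /= mul0n IH.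
Qed.

Lemma mk_cid hs : forall prev H, path leq prev hs -> last prev hs <= H ->
  count id (mk prev hs H) = H - prev.
Proof.
elim: hs => [|h hs IH] prev H /=.
- by move=> _ _; rewrite count_nseq /= mul1n.
- move=> /andP [Hph Hp] Hl. rewrite count_cat count_nseq /= mul1n IH //.
  have : h <= H.
    apply: leq_trans Hl.
    move: Hp; rewrite (path_sortedE leq_trans) => /andP [/allP Ha _].
    have := mem_last h hs; rewrite inE => /orP [/eqP -> // | /Ha //].
  lia.
Qed.

Lemma mk_size prev hs H : size (mk prev hs H) = size hs + count id (mk prev hs H).
Proof. by rewrite -(mk_cnegb hs prev H) addnC (count_predC id). Qed.

Lemma meet_ok u l W H (U L : nat -> nat) :
  count negb u = W -> count negb l = W -> count id u = H -> count id l = H -> 0 < W ->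
  (forall n y, east_step u n y <-> n < W /\ y = U n) ->
  (forall n y, east_step l n y <-> n < W /\ y = L n) ->
  L 0 = 0 -> U W.-1 = H -> (forall n, n.+1 < W -> L n.+1 < U n) ->
  forall i j, i <= size u -> j <= size l -> lpt u i = lpt l j ->
    (i = 0 /\ j = 0) \/ (i = size u /\ j = size l).
Proof.
move=> Hu1 Hl1 Hu2 Hl2 HW Eu El HL0 HUW Hov i j Hi Hj E.
have Su : size u = W + H by rewrite -(count_predC id u) addnC Hu1 Hu2.
have Sl : size l = W + H by rewrite -(count_predC id l) addnC Hl1 Hl2.
have Ei := lpt_sum u i. have Ej := lpt_sum l j. rewrite -E in Ej.
have Hij : i = j by lia.
subst j. clear Ej.
have [Cx Cy] := lpt_cnt u i.
case Hxy: (lpt u i) => [x y]. rewrite Hxy in E Ei Cx Cy.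
rewrite /= in Ei Cx Cy. rewrite Hu1 in Cx. rewrite Hu2 in Cy.
case: (posnP x) => Hx0.
- subst x. case: (posnP y) => Hy0; first by left; lia.
  have [y' [Hy' He]] := @east_G1 l _ i _ _ (leqnn _) Hj (esym E) ltac:(lia).
  move/El: He => [_ Hy2]. lia.
- case: (ltnP x W) => HxW.
  + have [y' [Hy' He]] := @east_G1 l _ i _ _ (leqnn _) Hj (esym E) ltac:(lia).
    move/El: He => [_ Hy'']. 
    have [y'' [Hy2 He2]] := @east_G2 u i _ _ Hi Hxy Hx0.
    move/Eu: He2 => [_ Hy3].
    have := Hov x.-1 ltac:(lia). rewrite prednK //. lia.
  + have [y'' [Hy2 He2]] := @east_G2 u i _ _ Hi Hxy Hx0.
    move/Eu: He2 => [_ Hy3].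
    have HxW' : x = W by lia. subst x.
    right. lia.
Qed.

Local Open Scope ring_scope.

Definition P1 (s : seq cell) := forall x1 x2 y1 y2 : int, x1 < x2 -> y1 < y2 ->
  (x1, y1) \in s -> (x1, y2) \in s -> (x2, y1) \in s -> (x2, y2) \in s.
Definition P2 (s : seq cell) := forall x1 x2 y1 y2 : int, x1 < x2 -> y1 < y2 ->
  (x1, y2) \in s -> (x2, y2) \in s -> (x2, y1) \in s -> (x1, y1) \in s.

Lemma P12_avoids s : P1 s -> P2 s -> avoids_pats s.
Proof.
move=> H1 H2; split; move=> [f [g [Hf [Hg Hm]]]].
- have Hf01 := Hf ord0 ord_max erefl. have Hg01 := Hg ord0 ord_max erefl.
  have M00 := Hm ord0 ord0. have M01 := Hm ord0 ord_max.
  have M10 := Hm ord_max ord0. have M11 := Hm ord_max ord_max.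
  rewrite !mxE /= in M00 M01 M10 M11.
  have := H1 (xmin s + (g ord0)%:Z) (xmin s + (g ord_max)%:Z)
            (ymax s - (f ord_max)%:Z) (ymax s - (f ord0)%:Z).
  rewrite M00 M10 M11 M01 => H. have := H ltac:(lia) ltac:(lia) erefl erefl erefl. by [].
- have Hf01 := Hf ord0 ord_max erefl. have Hg01 := Hg ord0 ord_max erefl.
  have M00 := Hm ord0 ord0. have M01 := Hm ord0 ord_max.
  have M10 := Hm ord_max ord0. have M11 := Hm ord_max ord_max.
  rewrite !mxE /= in M00 M01 M10 M11.
  have := H2 (xmin s + (g ord0)%:Z) (xmin s + (g ord_max)%:Z)
            (ymax s - (f ord_max)%:Z) (ymax s - (f ord0)%:Z).
  rewrite M00 M10 M11 M01 => H. have := H ltac:(lia) ltac:(lia) erefl erefl erefl. by [].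
Qed.

Lemma par_P12 s : is_parallelogram s -> P1 s /\ P2 s.
Proof.
move=> [u [l [dx [dy [_ [_ [_ Hs]]]]]]].
split.
- move=> x1 x2 y1 y2 Hx Hy /Hs [n1 [a1 [b1 [E1 [Ua1 [Lb1 [H1 H1']]]]]]]
     /Hs [n2 [a2 [b2 [E2 [Ua2 [Lb2 [H2 H2']]]]]]]
     /Hs [n3 [a3 [b3 [E3 [Ua3 [Lb3 [H3 H3']]]]]]].
  rewrite /= in E1 E2 E3 H1 H1' H2 H2' H3 H3'.
  apply/Hs; exists n3, a3, b3; rewrite /=; do 3 (split => //).
  have Hn : (n2 <= n3)%N by lia.
  have := @east_mono u _ _ _ _ Ua2 Ua3 Hn. lia.
- move=> x1 x2 y1 y2 Hx Hy /Hs [n1 [a1 [b1 [E1 [Ua1 [Lb1 [H1 H1']]]]]]]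
     /Hs [n2 [a2 [b2 [E2 [Ua2 [Lb2 [H2 H2']]]]]]]
     /Hs [n3 [a3 [b3 [E3 [Ua3 [Lb3 [H3 H3']]]]]]].
  rewrite /= in E1 E2 E3 H1 H1' H2 H2' H3 H3'.
  apply/Hs; exists n1, a1, b1; rewrite /=; do 3 (split => //).
  have Hn : (n1 <= n3)%N by lia.
  have := @east_mono l _ _ _ _ Lb1 Lb3 Hn. lia.
Qed.

Lemma bigmin_le (F : cell -> int) d r c : c \in r -> \big[Num.min/d]_(x <- r) F x <= F c.
Proof.
elim: r => [|a r IH] //=; rewrite big_cons in_cons => /orP [/eqP ->|Hc].
- by rewrite ge_min lexx.
- by rewrite ge_min (IH Hc) orbT.
Qed.

Lemma bigmax_ge (F : cell -> int) d r c : c \in r -> F c <= \big[Num.max/d]_(x <- r) F x.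
Proof.
elim: r => [|a r IH] //=; rewrite big_cons in_cons => /orP [/eqP ->|Hc].
- by rewrite le_max lexx.
- by rewrite le_max (IH Hc) orbT.
Qed.

Lemma bigmin_att (F : cell -> int) d r :
  \big[Num.min/d]_(x <- r) F x = d \/ exists2 c, c \in r & \big[Num.min/d]_(x <- r) F x = F c.
Proof.
elim: r => [|a r IH]; first by left; rewrite big_nil.
rewrite big_cons minEle; case: ifP => _.
- by right; exists a => //; rewrite mem_head.
- case: IH => [->|[c Hc ->]]; first by left.
  by right; exists c => //; rewrite in_cons Hc orbT.
Qed.

Lemma bigmax_att (F : cell -> int) d r :
  \big[Num.max/d]_(x <- r) F x = d \/ exists2 c, c \in r & \big[Num.max/d]_(x <- r) F x = F c.
Proof.
elim: r => [|a r IH]; first by left; rewrite big_nil.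
rewrite big_cons maxEle; case: ifP => _.
- case: IH => [->|[c Hc ->]]; first by left.
  by right; exists c => //; rewrite in_cons Hc orbT.
- by right; exists a => //; rewrite mem_head.
Qed.

Lemma bbox s c : c \in s ->
  xmin s <= c.1 /\ c.1 <= xmax s /\ ymin s <= c.2 /\ c.2 <= ymax s.
Proof.
move=> Hc; split; [|split; [|split]].
- exact: (bigmin_le (fun x => x.1)).
- exact: (bigmax_ge (fun x => x.1)).
- exact: (bigmin_le (fun x => x.2)).
- exact: (bigmax_ge (fun x => x.2)).
Qed.

Lemma xmin_att s : s != [::] -> exists2 c, c \in s & c.1 = xmin s.
Proof.
move=> Hs; case: (bigmin_att (fun x => x.1) (head (0,0) s).1 s) => [E|[c Hc E]].
- exists (head (0,0) s); last by rewrite /xmin E.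
  by case: s Hs {E} => //= a r _; rewrite mem_head.
- by exists c => //; rewrite /xmin E.
Qed.

Lemma xmax_att s : s != [::] -> exists2 c, c \in s & c.1 = xmax s.
Proof.
move=> Hs; case: (bigmax_att (fun x => x.1) (head (0,0) s).1 s) => [E|[c Hc E]].
- exists (head (0,0) s); last by rewrite /xmax E.
  by case: s Hs {E} => //= a r _; rewrite mem_head.
- by exists c => //; rewrite /xmax E.
Qed.

Lemma cell_eq s x y : xmin s <= x -> y <= ymax s ->
  (xmin s + (`|x - xmin s|%N)%:Z, ymax s - (`|ymax s - y|%N)%:Z) = (x, y).
Proof. move=> Hx Hy; congr (_, _); lia. Qed.

Lemma avoids_P12 s : avoids_pats s -> P1 s /\ P2 s.
Proof.
move=> [A1 A2]; split.
- move=> x1 x2 y1 y2 Hx Hy C11 C12 C21.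
  apply/negPn/negP => C22; apply: A1.
  have [B1 [B2 [B3 B4]]] := @bbox s _ C11.
  have [B5 [B6 [B7 B8]]] := @bbox s _ C12.
  have [B9 [B10 [B11 B12]]] := @bbox s _ C21.
  rewrite /= in B1 B2 B3 B4 B5 B6 B7 B8 B9 B10 B11 B12.
  exists (fun i : 'I_2 => if (i : nat) == 0%N then inord `|ymax s - y2| else inord `|ymax s - y1|).
  exists (fun j : 'I_2 => if (j : nat) == 0%N then inord `|x1 - xmin s| else inord `|x2 - xmin s|).
  have Kh : forall y, ymin s <= y <= ymax s -> (`|ymax s - y| < pheight s)%N.
    move=> y Hy0; rewrite /pheight; lia.
  have Kw : forall x, xmin s <= x <= xmax s -> (`|x - xmin s| < pwidth s)%N.
    move=> x Hx0; rewrite /pwidth; lia.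
  split; [|split].
  + move=> [[|[|i]] Hi] [[|[|i']] Hi'] //= _.
    rewrite !inordK; [lia | apply: Kh; lia | apply: Kh; lia].
  + move=> [[|[|i]] Hi] [[|[|i']] Hi'] //= _.
    rewrite !inordK; [lia | apply: Kw; lia | apply: Kw; lia].
  + move=> [[|[|i]] Hi] [[|[|i']] Hi'] //=; rewrite !mxE /= !inordK;
      try (apply: Kh; lia); try (apply: Kw; lia); rewrite cell_eq //; exact/negbTE.
- move=> x1 x2 y1 y2 Hx Hy C12 C22 C21.
  apply/negPn/negP => C11; apply: A2.
  have [B1 [B2 [B3 B4]]] := @bbox s _ C12.
  have [B5 [B6 [B7 B8]]] := @bbox s _ C22.
  have [B9 [B10 [B11 B12]]] := @bbox s _ C21.
  rewrite /= in B1 B2 B3 B4 B5 B6 B7 B8 B9 B10 B11 B12.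
  exists (fun i : 'I_2 => if (i : nat) == 0%N then inord `|ymax s - y2| else inord `|ymax s - y1|).
  exists (fun j : 'I_2 => if (j : nat) == 0%N then inord `|x1 - xmin s| else inord `|x2 - xmin s|).
  have Kh : forall y, ymin s <= y <= ymax s -> (`|ymax s - y| < pheight s)%N.
    move=> y Hy0; rewrite /pheight; lia.
  have Kw : forall x, xmin s <= x <= xmax s -> (`|x - xmin s| < pwidth s)%N.
    move=> x Hx0; rewrite /pwidth; lia.
  split; [|split].
  + move=> [[|[|i]] Hi] [[|[|i']] Hi'] //= _.
    rewrite !inordK; [lia | apply: Kh; lia | apply: Kh; lia].
  + move=> [[|[|i]] Hi] [[|[|i']] Hi'] //= _.
    rewrite !inordK; [lia | apply: Kw; lia | apply: Kw; lia].
  + move=> [[|[|i]] Hi] [[|[|i']] Hi'] //=; rewrite !mxE /= !inordK;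
      try (apply: Kh; lia); try (apply: Kw; lia); rewrite cell_eq //; exact/negbTE.
Qed.

Lemma ivt (c : cell) p X : path adjacent c p ->
  (c.1 <= X <= (last c p).1) \/ ((last c p).1 <= X <= c.1) ->
  exists2 e, e \in c :: p & e.1 = X.
Proof.
elim: p c => [|d p IH] c /=.
- move=> _ H; exists c; first by rewrite mem_head. case: H; lia.
- move=> /andP [Hcd Hp] H.
  case: (boolP (c.1 == X)) => [/eqP HX|HX]; first by exists c => //; rewrite mem_head.
  have H' : (d.1 <= X <= (last d p).1) \/ ((last d p).1 <= X <= d.1).
    move: Hcd H HX; rewrite /adjacent; move: (last d p) => L.
    case: c => [c1 c2]; case: d {Hp} => [d1 d2] /=; move=> /eqP Hcd H /eqP HX; lia.
  have [e He1 He2] := IH d Hp H'.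
  by exists e => //; rewrite in_cons He1 orbT.
Qed.

Lemma hcross (s : seq cell) (c : cell) p X : c \in s -> all (fun e => e \in s) p -> path adjacent c p ->
  c.1 <= X < (last c p).1 -> exists y, (X, y) \in s /\ (X + 1, y) \in s.
Proof.
elim: p c => [|d p IH] c /=.
- move=> _ _ _ H; lia.
- move=> Hc /andP [Hd Hall] /andP [Hcd Hp] H.
  have [Y1 [Y2 [Y3 Y4]]] : [/\ c.1 <= X, X < (last d p).1, d \in s & adjacent c d] by move/andP: H => [H1 H2]; split.
  move: Y1 Y2 Y3 Y4 Hc Hp; clear H Hcd Hd.
  case: c => [c1 c2]; case: d => [d1 d2] /= Y1 Y2 Hd Hcd Hc Hp.
  move: Hcd; rewrite /adjacent /= => /eqP Hcd.
  case: (boolP ((c1 == X) && (d1 == X + 1))) => [/andP [/eqP E1 /eqP E2]|Hn].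
  + exists c2; split; first by rewrite -E1.
    have -> : c2 = d2 by lia.
    by rewrite -E2.
  + apply: (IH (d1, d2)) => //=. apply/andP; split => //. move: Hn; rewrite negb_and => /orP [/eqP|/eqP] Hn; lia.
Qed.

Lemma adj_off (c d : cell) : adjacent c d -> c.1 != d.1 ->
  c.2 = d.2 /\ (d.1 = c.1 + 1 \/ d.1 = c.1 - 1).
Proof. rewrite /adjacent; case: c => [a b]; case: d => [e f] /= /eqP H /eqP H'. lia. Qed.

Lemma colconv (s : seq cell) : P1 s -> P2 s -> forall n (p : seq cell) X A B C,
  (size p <= n)%N -> (X, A) \in s -> all (fun e => e \in s) p ->
  path adjacent (X, A) p -> last (X, A) p = (X, B) -> A < C < B -> (X, C) \in s.
Proof.
move=> H1 H2; elim=> [|n IH] p X A B C Hsz HA Hall Hp Hl HC.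
- case: p Hsz Hp Hl Hall => //= _ _ [E] _; lia.
- case: (boolP ((X, C) \in s)) => // HnC.
  have Hne : p != [::] by case: p Hsz Hp Hl Hall => //= _ _ [E] _; lia.
  have Hhas : has (fun e : cell => e.1 == X) p.
    apply/hasP; case: p Hne Hsz Hp Hl Hall {HnC} => // q p _ _ _ Hl _.
    exists (last q p); first exact: mem_last.
    by rewrite /= in Hl; rewrite Hl.
  move: Hsz Hall Hp Hl; case: (split_find Hhas) => q p1 p2 Hq Hnot.
  rewrite size_cat size_rcons all_cat all_rcons cat_path rcons_path last_cat last_rcons.
  move=> Hsz /andP [/andP [Hqs Hall1] Hall2] /andP [/andP [Hp1 Hq1] Hp2] Hl.
  case: q Hq Hqs Hq1 Hp2 Hl => q1 q2 /= /eqP Eq1 Hqs Hq1 Hp2 Hl. subst q1.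
  case: p2 Hsz Hall2 Hp2 Hl => [|r p2] Hsz Hall2 Hp2 Hl.
  + (* q is the endpoint *)
    case: Hl => Eq2. subst q2.
    case: p1 Hsz Hall1 Hp1 Hq1 Hnot => [|r p1] /= Hsz Hall1 Hp1 Hq1 Hnot.
    * move: Hq1; rewrite /adjacent /= => /eqP; lia.
    * move/andP: Hall1 => [Hrs Hall1]. move/andP: Hp1 => [Har Hp1].
      rewrite negb_or in Hnot. move/andP: Hnot => [Hr Hnot].
      have [Er2 Er1] := @adj_off _ _ Har ltac:(by rewrite /= eq_sym).
      have Hr' : (last r p1).1 != X.
        have := mem_last r p1; rewrite inE => /orP [/eqP ->//|Hm].
        by apply/negP => /eqP E; move/negP: Hnot; apply; apply/hasP; exists (last r p1) => //; rewrite E.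
      have Hr's : last r p1 \in s.
        have := mem_last r p1; rewrite inE => /orP [/eqP ->//|Hm]. exact: (allP Hall1).
      have [Er'2 Er'1] := @adj_off (last r p1) (X, B) Hq1 Hr'.
      rewrite /= in Er'2 Er'1 Er1 Er2.
      have Hside : r.1 = (last r p1).1.
        case: (boolP (r.1 == (last r p1).1)) => [/eqP //|Hneq].
        have Hiv : (r.1 <= X <= (last r p1).1) \/ ((last r p1).1 <= X <= r.1).
          move: Er1 Er'1 Hneq; move: (last r p1).1 r.1 => a b.
          case=> -> [] Ea /eqP Hn; clear -Ea Hn; [right; lia | exfalso; lia | exfalso; lia | left; lia].
        have [e He1 He2] := @ivt r p1 X Hp1 Hiv.
        exfalso. move: He1; rewrite inE => /orP [/eqP Ee|Hm].
        - by move: Hr; rewrite -Ee He2 eqxx.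
        - by move/negP: Hnot; apply; apply/hasP; exists e => //; rewrite He2.
      case: r Er2 Er1 Hrs Har Hp1 Hall1 Hside Hr Hr' Hr's Er'2 Er'1 Hq1 Hnot => r1 r2 /= Er2 Er1 Hrs Har Hp1 Hall1 Hside Hr Hr' Hr's Er'2 Er'1 Hq1 Hnot.
      subst r2.
      have HL : last (r1, A) p1 = (r1, B).
        by rewrite [last _ _]surjective_pairing -Hside Er'2.
      have HrC := IH p1 r1 A B C ltac:(clear -Hsz; lia) Hrs Hall1 Hp1 HL HC.
      have HrB : (r1, B) \in s by rewrite -HL.
      have HXB : (X, B) \in s by [].
      case: Er1 => Er1.
      - have := H2 X r1 C B ltac:(clear -Er1; lia) ltac:(clear -HC; lia) HXB HrB HrC.
        by move=> HH; rewrite HH in HnC.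
      - have := H1 r1 X A C ltac:(clear -Er1; lia) ltac:(clear -HC; lia) Hrs HrC HA.
        by move=> HH; rewrite HH in HnC.
  + (* q is an intermediate visit to column X *)
    move/andP: Hp2 => [Hqr Hp2].
    have HqC : q2 != C by apply/eqP => E; subst q2; rewrite Hqs in HnC.
    case: (ltP q2 C) => Hq2.
    * suff HH : (X, C) \in s by rewrite HH in HnC.
      apply: (IH (r :: p2) X q2 B C) => //=; [move: Hsz => /= Hsz; clear -Hsz; lia | by rewrite Hqr | clear -Hq2 HC; lia].
    * suff HH : (X, C) \in s by rewrite HH in HnC.
      apply: (IH (rcons p1 (X, q2)) X A q2 C) => //.
      -- rewrite size_rcons; move: Hsz => /= Hsz; clear -Hsz; lia.
      -- by rewrite all_rcons Hqs.
      -- by rewrite rcons_path Hp1.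
      -- by rewrite last_rcons.
      -- move/eqP: HqC => HqC; clear -Hq2 HC HqC; lia.
Qed.

Lemma seq_choice (V : Type) (d : V) (P : nat -> V -> Prop) W :
  (forall n, (n < W)%N -> exists v, P n v) ->
  exists vs : seq V, size vs = W /\ forall n, (n < W)%N -> P n (nth d vs n).
Proof.
elim: W => [|W IH] H; first by exists [::].
have [vs [Hs Hvs]] : exists vs : seq V, size vs = W /\ forall n, (n < W)%N -> P n (nth d vs n).
  by apply: IH => n Hn; apply: H; apply: ltn_trans Hn _.
have [v Hv] := H W (ltnSn W).
exists (rcons vs v); split; first by rewrite size_rcons Hs.
move=> n Hn; rewrite nth_rcons Hs.
case: (ltnP n W) => Hn'; first exact: Hvs.
have -> : n = W by apply/eqP; rewrite eqn_leq Hn'; move: Hn; rewrite ltnS => ->.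
by rewrite eqxx.
Qed.

Lemma column_interval (s : seq cell) : P1 s -> P2 s -> is_polyomino s ->
  forall X y0, (X, y0) \in s ->
  exists b t : int, forall y, (X, y) \in s <-> b <= y <= t.
Proof.
move=> H1 H2 [_ Hpoly] X y0 Hy0.
pose P := fun Y : nat => (X, ymin s + Y%:Z) \in s.
have [_ [_ [B3 B4]]] := @bbox s _ Hy0. rewrite /= in B3 B4.
have exP : exists Y, P Y.
  exists `|y0 - ymin s|%N; rewrite /P.
  have -> : ymin s + (`|y0 - ymin s|%N)%:Z = y0 by clear -B3; lia.
  exact: Hy0.
have ubP : forall Y, P Y -> (Y <= `|ymax s - ymin s|)%N.
  move=> Y HY; have [_ [_ [C3 C4]]] := @bbox s _ HY. rewrite /= in C3 C4.
  clear -C3 C4; lia.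
case: (ex_minnP exP) => m Pm Hmin.
case: (ex_maxnP exP ubP) => M PM Hmax.
exists (ymin s + m%:Z), (ymin s + M%:Z) => y; split.
- move=> Hy. have [_ [_ [C3 C4]]] := @bbox s _ Hy. rewrite /= in C3 C4.
  have HY : P `|y - ymin s|%N.
    rewrite /P. have -> : ymin s + (`|y - ymin s|%N)%:Z = y by clear -C3; lia.
    exact: Hy.
  have := Hmin _ HY. have := Hmax _ HY. clear -C3; lia.
- move=> Hy.
  case: (boolP (y == ymin s + m%:Z)) => [/eqP ->|Hb]; first exact: Pm.
  case: (boolP (y == ymin s + M%:Z)) => [/eqP ->|Ht]; first exact: PM.
  rewrite /P in Pm PM.
  have [p [Hall [Hp Hl]]] := Hpoly _ _ Pm PM.
  apply: (@colconv s H1 H2 (size p) p X _ _ y (leqnn (size p)) Pm Hall Hp Hl).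
  move/eqP: Hb => Hb. move/eqP: Ht => Ht. clear -Hy Hb Ht. lia.
Qed.

Lemma path_map_iota (f : nat -> nat) : forall k m prev, (prev <= f m)%N ->
  (forall i, (m <= i)%N -> (i.+1 < m + k)%N -> (f i <= f i.+1)%N) ->
  path leq prev (map f (iota m k)).
Proof.
elim=> [|k IH] m prev Hp Hf //=.
rewrite Hp /=. case: k IH Hf => [|k] IH Hf //.
apply: IH; first by apply: Hf => //; lia.
move=> i Hi Hi'; apply: Hf; lia.
Qed.

Lemma last_map_iota (f : nat -> nat) W : last 0%N (map f (iota 0 W.+1)) = f W.
Proof. by rewrite -addn1 iotaD map_cat last_cat /= add0n. Qed.

Lemma nth_map_iota (f : nat -> nat) W n : (n < W)%N -> nth 0%N (map f (iota 0 W)) n = f n.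
Proof. move=> Hn. rewrite (nth_map 0%N) ?size_iota // nth_iota //. Qed.

Lemma mk_east' (f : nat -> nat) W H : path leq 0%N (map f (iota 0 W)) ->
  forall n y, east_step (mk 0 (map f (iota 0 W)) H) n y <-> ((n < W)%N /\ y = f n).
Proof.
move=> Hp n y; rewrite (@mk_east _ 0 H Hp) size_map size_iota addn0.
split; move=> [Hn Hy]; split => //; by rewrite nth_map_iota in Hy *.
Qed.

Lemma dir2 s : is_polyomino s -> P1 s -> P2 s -> is_parallelogram s.
Proof.
move=> Hpo H1 H2. have [Hne Hpoly] := Hpo.
have [cl Hcl Ecl] := @xmin_att s Hne. have [cr Hcr Ecr] := @xmax_att s Hne.
have [p [Hall [Hp Hl]]] := Hpoly _ _ Hcl Hcr.
have [_ [Bx _]] := @bbox s _ Hcl.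
set W := pwidth s.
have HW : W = (`|xmax s - xmin s|%N).+1 by [].
have Hcol : forall n, (n < W)%N -> exists y, (xmin s + n%:Z, y) \in s.
  move=> n Hn.
  have Hiv : (cl.1 <= xmin s + n%:Z <= (last cl p).1) \/ ((last cl p).1 <= xmin s + n%:Z <= cl.1).
    left; rewrite Hl Ecl Ecr. clear -Hn HW Bx Ecl. rewrite Ecl in Bx. lia.
  have [e He1 He2] := @ivt cl p _ Hp Hiv.
  exists e.2. rewrite -He2 -surjective_pairing.
  move: He1; rewrite inE => /orP [/eqP -> //|He]. exact: (allP Hall).
have Hov : forall n, (n.+1 < W)%N ->
    exists y, (xmin s + n%:Z, y) \in s /\ (xmin s + (n.+1)%:Z, y) \in s.
  move=> n Hn.
  have Hx : cl.1 <= xmin s + n%:Z < (last cl p).1.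
    rewrite Hl Ecl Ecr. clear -Hn HW Bx Ecl. rewrite Ecl in Bx. lia.
  have [y [Hy1 Hy2]] := @hcross s cl p _ Hcl Hall Hp Hx.
  exists y; split => //.
  have -> : xmin s + (n.+1)%:Z = xmin s + n%:Z + 1 by lia.
  exact: Hy2.
have Hbt : forall n, (n < W)%N -> exists v : int * int,
    forall y, (xmin s + n%:Z, y) \in s <-> v.1 <= y <= v.2.
  move=> n Hn. have [y0 Hy0] := Hcol n Hn.
  have [b [t Hbt]] := @column_interval s H1 H2 Hpo _ _ Hy0.
  by exists (b, t).
have [vs [_ Hvs]] := @seq_choice _ (0, 0) _ _ Hbt.
set b := fun n => (nth (0, 0) vs n).1.
set t := fun n => (nth (0, 0) vs n).2.
have Hv : forall n, (n < W)%N -> forall y, (xmin s + n%:Z, y) \in s <-> b n <= y <= t n.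
  by move=> n Hn y; apply: Hvs.
clearbody b t. clear Hvs Hbt.
have Hbtn : forall n, (n < W)%N -> b n <= t n.
  move=> n Hn; have [y0 Hy0] := Hcol n Hn. move/(Hv n Hn): Hy0. clear. lia.
have Hmono : forall n, (n.+1 < W)%N ->
    [/\ b n <= b n.+1, t n <= t n.+1 & b n.+1 <= t n].
  move=> n Hn. have Hn' : (n < W)%N by apply: ltn_trans Hn.
  have [y0 [Hy1 Hy2]] := Hov n Hn.
  have Hy1' := Hy1. have Hy2' := Hy2.
  move/(Hv n Hn'): Hy1' => /andP [Ey1 Ey2]. move/(Hv n.+1 Hn): Hy2' => /andP [Ey3 Ey4].
  split.
  - rewrite leNgt; apply/negP => Hlt.
    have Hb1 : (xmin s + (n.+1)%:Z, b n.+1) \in s.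
      by apply/(Hv n.+1 Hn); rewrite lexx /=; apply: le_trans Ey3 Ey4.
    have Hx : xmin s + n%:Z < xmin s + (n.+1)%:Z by clear; lia.
    have Hy : b n.+1 < y0 by apply: lt_le_trans Hlt Ey1.
    have := H2 _ _ _ _ Hx Hy Hy1 Hy2 Hb1.
    move/(Hv n Hn') => /andP [Hc _]. by move: Hlt; rewrite ltNge Hc.
  - rewrite leNgt; apply/negP => Hlt.
    have Ht1 : (xmin s + n%:Z, t n) \in s.
      by apply/(Hv n Hn'); rewrite lexx andbT; apply: le_trans Ey1 Ey2.
    have Hx : xmin s + n%:Z < xmin s + (n.+1)%:Z by clear; lia.
    have Hy : y0 < t n by apply: le_lt_trans Ey4 Hlt.
    have := H1 _ _ _ _ Hx Hy Hy1 Ht1 Hy2.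
    move/(Hv n.+1 Hn) => /andP [_ Hc]. by move: Hlt; rewrite ltNge Hc.
  - by apply: le_trans Ey3 Ey2.
pose dy := b 0%N.
have HW0 : (0 < W)%N by [].
have Hb0 : forall n, (n < W)%N -> dy <= b n.
  elim=> [|n IH] Hn; first by rewrite lexx.
  have [Hm _ _] := Hmono n Hn. apply: le_trans Hm. by apply: IH; apply: ltn_trans Hn.
pose hu := fun n => `|(t n + 1 - dy)%R|%N.
pose hl := fun n => `|(b n - dy)%R|%N.
pose Hmax := hu W.-1.
have Hpu : path leq 0%N (map hu (iota 0 W)).
  apply: path_map_iota => // i _ Hi.
  have [_ Ht _] := Hmono i Hi. have := Hb0 i (ltn_trans (ltnSn i) Hi).
  have := Hbtn i (ltn_trans (ltnSn i) Hi). rewrite /hu. clear -Ht. lia.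
have Hpl : path leq 0%N (map hl (iota 0 W)).
  apply: path_map_iota => // i _ Hi.
  have [Hb _ _] := Hmono i Hi. have := Hb0 i (ltn_trans (ltnSn i) Hi).
  rewrite /hl. clear -Hb. lia.
have EW : W = W.-1.+1 by rewrite prednK.
have Hlu : (last 0%N (map hu (iota 0 W)) <= Hmax)%N by rewrite EW last_map_iota.
have Hll : (last 0%N (map hl (iota 0 W)) <= Hmax)%N.
  rewrite EW last_map_iota /Hmax /hl /hu.
  have := Hbtn W.-1 ltac:(by rewrite ltn_predL). have := Hb0 W.-1 ltac:(by rewrite ltn_predL).
  clear. lia.
pose u := mk 0 (map hu (iota 0 W)) Hmax.
pose l := mk 0 (map hl (iota 0 W)) Hmax.
have Eu := @mk_east' hu W Hmax Hpu. have El := @mk_east' hl W Hmax Hpl.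
have Cu1 : count negb u = W by rewrite mk_cnegb size_map size_iota.
have Cl1 : count negb l = W by rewrite mk_cnegb size_map size_iota.
have Cu2 : count id u = Hmax by rewrite mk_cid // subn0.
have Cl2 : count id l = Hmax by rewrite mk_cid // subn0.
exists u, l, (xmin s), dy. split; [|split; [|split]].
- by rewrite /u /l !mk_size !size_map -/u -/l Cu2 Cl2.
- by rewrite !lpt_size Cu1 Cl1 Cu2 Cl2.
- apply: (@meet_ok u l W Hmax hu hl Cu1 Cl1 Cu2 Cl2 HW0 Eu El).
  + by rewrite /hl /dy subrr.
  + by [].
  + move=> n Hn. have [_ _ Hc] := Hmono n Hn. have := Hb0 n.+1 Hn.
    have := Hbtn n (ltn_trans (ltnSn n) Hn). rewrite /hl /hu. clear -Hc. lia.
- move=> [c1 c2] /=; split.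
  + move=> Hc. have [B1 [B2 _]] := @bbox s _ Hc. rewrite /= in B1 B2.
    set n := `|c1 - xmin s|%N.
    have Hn : (n < W)%N by rewrite HW /n; clear -B1 B2; lia.
    have Ec : c1 = xmin s + n%:Z by rewrite /n; clear -B1; lia.
    rewrite Ec in Hc. move/(Hv n Hn): Hc => /andP [Hc1 Hc2].
    have Hd := Hb0 n Hn.
    exists n, (hu n), (hl n); split; first by rewrite Ec; clear; lia.
    split; first by apply/Eu.
    split; first by apply/El.
    rewrite /hu /hl; clear -Hc1 Hc2 Hd; split; lia.
  + move=> [n [yu [yl [Ex [Hu [Hl' [Hy1 Hy2]]]]]]].
    move/Eu: Hu => [Hn Eyu]. move/El: Hl' => [_ Eyl]. subst yu yl.
    have Ec : c1 = xmin s + n%:Z by clear -Ex; lia.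
    rewrite Ec. apply/(Hv n Hn).
    have Hd := Hb0 n Hn. have Hbt2 := Hbtn n Hn.
    move: Hy1 Hy2; rewrite /hu /hl. clear -Hd Hbt2. move=> Hy1 Hy2. apply/andP; split; lia.
Qed.

Theorem proposition14 (s : seq cell) :
  is_polyomino s -> (is_parallelogram s <-> avoids_pats s).
Proof.
move=> Hpo; split.
- move=> /par_P12 [H1 H2]; exact: P12_avoids.
- move=> /avoids_P12 [H1 H2]; exact: dir2.
Qed.
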